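(* Let $\mathcal S$ be a non-degenerate affine zipper with signature $(0,\dots,0)$ whose matrices have dominated splitting of index-1 with multicone $M$. Then for every $\mathbf i\in\Sigma\setminus B$, $$\alpha(\pi(\mathbf i))\le\limsup_{n\to\infty}\frac{\log\|A_{\mathbf i|_n}\|}{\log\lambda_{\mathbf i|_n}}.$$
   Context: Affine zipper with signature $(0,\dots,0)$: $f_i(x)=A_ix+t_i$ ($i=0,\dots,N-1$) on $\mathbb R^d$, $A_i$ invertible, each $f_i$ a contraction, vertices $z_0,\dots,z_N$ with $f_i(z_0)=z_i$, $f_i(z_N)=z_{i+1}$; $\Gamma=\bigcup_if_i(\Gamma)$. Fix a probability vector $\lambda$ with $\lambda_i>0$; $g_i(x)=\lambda_ix+\gamma_i$, $\gamma_i=\sum_{j<i}\lambda_j$; $v:[0,1]\to\mathbb R^d$ the unique continuous function with $v(x)=f_i(v(g_i^{-1}(x)))$ for $x\in g_i([0,1])$; $\alpha(x)=\liminf_{y\to x}\frac{\log\|v(x)-v(y)\|}{\log|x-y|}$. For a word $\bar\imath=i_1\dots i_k$: $A_{\bar\imath}=A_{i_1}\cdots A_{i_k}$, $\lambda_{\bar\imath}=\lambda_{i_1}\cdots\lambda_{i_k}$, $f_{\bar\imath}=f_{i_1}\circ\cdots\circ f_{i_k}$, $\Gamma_{\bar\imath}=f_{\bar\imath}(\Gamma)$. Operator norms are Euclidean. Dominated splitting of index-1: there is a nonempty open $M\subset\mathbb{PR}^{d-1}$ (projective action; $\langle w\rangle$ the line through $w\neq0$) with finitely many components with pairwise disjoint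 closures, $\bigcup_iA_i\overline M\subset M^o$, and some hyperplane transverse to all elements of $\overline M$. $M(x)=\{y\ne x:\langle y-x\rangle\in M\}$. Non-degenerate: there is a bounded open $U$ with $f_i(U)\cap f_j(U)=\emptyset$ ($i\ne j$), $\Gamma\cap U\ne\emptyset$, and $\langle z_N-z_0\rangle\notin\bigcap_{k\ge0}\bigcap_{|\bar\imath|=k}A_{\bar\imath}^{-1}(M^c)$. Symbolic: $\Sigma=\{0,\dots,N-1\}^{\mathbb N}$, shift $\sigma$, $\mathbf i|_n=i_1\dots i_n$; $\pi(\mathbf i)=\sum_{n\ge1}\lambda_{\mathbf i|_{n-1}}\gamma_{i_n}$, $\Pi(\mathbf i)=\lim_nf_{i_1}\circ\cdots\circ f_{i_n}(0)$, so $v(\pi(\mathbf i))=\Pi(\mathbf i)$. Bad set: for $n,l,m\ge1$, $B_{n,l,m}$ is the set of $\mathbf i\in\Sigma$ with $\big(M(\Pi(\mathbf i))\setminus B_{1/n}(\Pi(\mathbf i))\big)\cap\big(\Gamma\setminus(\Gamma_{\mathbf i|_l}\cup\Gamma_{\mathbf i|_{l-1}(i_l-1)(N-1)^m}\cup\Gamma_{\mathbf i|_{l-1}(i_l+1)0^m})\big)=\emptyset$ (open ball $B_r$; $\mathbf i|_{l-1}(i_l-1)(N-1)^m$ is $i_1\dots i_{l-1}$ followed by $i_l-1$ and $m$ copies of $N-1$, similarly the other; the corresponding $\Gamma$-piece is $\emptyset$ if $i_l=0$, resp. $i_l=N-1$). Then $B=\bigcap_{n,l,m\ge1}\bigcup_{K\ge0}\bigcap_{k\ge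 K}\sigma^{-k}B_{n,l,m}$. *)

(* Defs.v *)
From Stdlib Require Import Reals List ClassicalEpsilon.
Open Scope R_scope.

(* Points of R^d are represented as functions nat -> R; only the
   coordinates 0..d-1 are significant (all notions below only look at
   those coordinates).  Matrices are nat -> nat -> R likewise. *)
Definition vec := nat -> R.
Definition mat := nat -> nat -> R.

Fixpoint rsum (n : nat) (f : nat -> R) : R :=
  match n with O => 0 | S n' => rsum n' f + f n' end.

Definition vadd (x y : vec) : vec := fun k => x k + y k.
Definition vsub (x y : vec) : vec := fun k => x k - y k.
Definition dot (d : nat) (x y : vec) : R := rsum d (fun k => x k * y k).
Definition norm (d : nat) (x : vec) : R := sqrt (dot d x x).
Definition veq (d : nat) (x y : vec) : Prop := forall k, (k < d)%nat -> x k = y k.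

Definition matvec (d : nat) (A : mat) (x : vec) : vec :=
  fun i => rsum d (fun k => A i k * x k).
Definition matmul (d : nat) (A B : mat) : mat :=
  fun i j => rsum d (fun k => A i k * B k j).
Definition idm : mat := fun i j => if Nat.eqb i j then 1 else 0.

Definition invertible (d : nat) (A : mat) : Prop :=
  exists B : mat, forall i j, (i < d)%nat -> (j < d)%nat ->
    matmul d A B i j = idm i j /\ matmul d B A i j = idm i j.

Definition opnorm (d : nat) (A : mat) : R :=
  epsilon (inhabits 0)
    (fun r => is_lub (fun y => exists x, norm d x <= 1 /\ y = norm d (matvec d A x)) r).

Definition contraction (d : nat) (f : vec -> vec) : Prop :=
  exists c, 0 <= c < 1 /\
    forall x y, norm d (vsub (f x) (f y)) <= c * norm d (vsub x y).

Definition faff (d : nat) (A : nat -> mat) (t : nat -> vec) (i : nat) (x : vec) : vec :=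
  vadd (matvec d (A i) x) (t i).

Definition word := list nat.
Definition matw (d : nat) (A : nat -> mat) (w : word) : mat :=
  fold_right (fun i B => matmul d (A i) B) idm w.
Definition lamw (lam : nat -> R) (w : word) : R :=
  fold_right (fun i r => lam i * r) 1 w.
Definition fw (d : nat) (A : nat -> mat) (t : nat -> vec) (w : word) (x : vec) : vec :=
  fold_right (fun i y => faff d A t i y) x w.

(* symbolic space: s n is the letter i_{n+1} *)
Definition in_Sigma (N : nat) (s : nat -> nat) : Prop := forall n, (s n < N)%nat.
Definition restr (s : nat -> nat) (n : nat) : word := map s (seq 0 n).
Definition shift (k : nat) (s : nat -> nat) : nat -> nat := fun j => s (j + k)%nat.

Definition gam (lam : nat -> R) (i : nat) : R := rsum i lam.

Definition pi_sym (lam : nat -> R) (s : nat -> nat) : R :=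
  epsilon (inhabits 0)
    (fun x => infinite_sum (fun n => lamw lam (restr s n) * gam lam (s n)) x).

Definition Pi_sym (d : nat) (A : nat -> mat) (t : nat -> vec) (s : nat -> nat) : vec :=
  epsilon (inhabits (fun _ => 0))
    (fun p => forall eps, eps > 0 -> exists n0, forall n, (n0 <= n)%nat ->
       norm d (vsub (fw d A t (restr s n) (fun _ => 0)) p) < eps).

Definition Gam (d N : nat) (A : nat -> mat) (t : nat -> vec) (p : vec) : Prop :=
  exists s, in_Sigma N s /\ veq d p (Pi_sym d A t s).
Definition Gamw (d N : nat) (A : nat -> mat) (t : nat -> vec) (w : word) (p : vec) : Prop :=
  exists q, Gam d N A t q /\ veq d p (fw d A t w q).

Definition openS (d : nat) (S : vec -> Prop) : Prop :=
  forall x, S x -> exists eps, eps > 0 /\ forall y, norm d (vsub y x) < eps -> S y.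
Definition scal (c : R) (x : vec) : vec := fun k => c * x k.

(* subsets of PR^{d-1} are represented as cones of nonzero vectors
   (unions of lines through 0, with 0 removed) *)
Definition pcone (d : nat) (S : vec -> Prop) : Prop :=
  (forall x, S x -> norm d x > 0) /\ (forall x c, S x -> c <> 0 -> S (scal c x)).
Definition popen (d : nat) (S : vec -> Prop) : Prop := pcone d S /\ openS d S.
Definition pclos (d : nat) (S : vec -> Prop) (w : vec) : Prop :=
  norm d w > 0 /\ forall eps, eps > 0 -> exists u, S u /\ norm d (vsub u w) < eps.
Definition pint (d : nat) (S : vec -> Prop) (w : vec) : Prop :=
  exists eps, eps > 0 /\ forall u, norm d (vsub u w) < eps -> S u.
Definition pconnected (d : nat) (C : vec -> Prop) : Prop :=
  ~ exists U V, popen d U /\ popen d V /\ (forall x, C x -> U x \/ V x) /\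
      (exists x, C x /\ U x) /\ (exists x, C x /\ V x) /\
      (forall x, ~ (C x /\ U x /\ V x)).

Definition dominated_splitting (d N : nat) (A : nat -> mat) (M : vec -> Prop) : Prop :=
  popen d M /\ (exists x, M x) /\
  (exists (k : nat) (C : nat -> vec -> Prop),
     (forall j, (j < k)%nat -> popen d (C j) /\ (exists x, C j x) /\ pconnected d (C j)) /\
     (forall x, M x <-> exists j, (j < k)%nat /\ C j x) /\
     (forall j j', (j < k)%nat -> (j' < k)%nat -> j <> j' ->
        forall w, ~ (pclos d (C j) w /\ pclos d (C j') w))) /\
  (forall i, (i < N)%nat -> forall w, pclos d M w -> pint d M (matvec d (A i) w)) /\
  (exists a, norm d a > 0 /\ forall w, pclos d M w -> dot d a w <> 0).

Definition Mx (d : nat) (M : vec -> Prop) (x y : vec) : Prop :=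
  ~ veq d y x /\ M (vsub y x).

Definition nondegenerate (d N : nat) (A : nat -> mat) (t : nat -> vec) (z : nat -> vec)
    (M : vec -> Prop) : Prop :=
  (exists U : vec -> Prop,
     openS d U /\ (exists R0, forall x, U x -> norm d x <= R0) /\
     (forall i j, (i < N)%nat -> (j < N)%nat -> i <> j ->
        forall x y, U x -> U y -> ~ veq d (faff d A t i x) (faff d A t j y)) /\
     (exists p, Gam d N A t p /\ U p)) /\
  (* <z_N - z_0> is not in the intersection of the A_w^{-1}(M^c) *)
  ~ veq d (z N) (z 0%nat) /\
  (exists w : word, Forall (fun i => (i < N)%nat) w /\
      M (matvec d (matw d A w) (vsub (z N) (z 0%nat)))).

Definition Bnlm (d N : nat) (A : nat -> mat) (t : nat -> vec) (M : vec -> Prop)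
    (n l m : nat) (s : nat -> nat) : Prop :=
  let P := Pi_sym d A t s in
  ~ exists y,
      (Mx d M P y /\ ~ norm d (vsub y P) < / INR n) /\
      (Gam d N A t y /\
       ~ Gamw d N A t (restr s l) y /\
       ~ ((0 < s (l - 1)%nat)%nat /\
          Gamw d N A t (restr s (l - 1) ++ (s (l - 1)%nat - 1)%nat :: repeat (N - 1)%nat m) y) /\
       ~ ((s (l - 1)%nat + 1 < N)%nat /\
          Gamw d N A t (restr s (l - 1) ++ (s (l - 1)%nat + 1)%nat :: repeat 0%nat m) y)).

Definition in_B (d N : nat) (A : nat -> mat) (t : nat -> vec) (M : vec -> Prop)
    (s : nat -> nat) : Prop :=
  forall n l m, (1 <= n)%nat -> (1 <= l)%nat -> (1 <= m)%nat ->
    exists K, forall k, (K <= k)%nat -> Bnlm d N A t M n l m (shift k s).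

(* alpha(x) <= r, where alpha(x) = liminf_{y -> x, y in [0,1]} log|v x - v y| / log|x - y|
   (the quotient is +infinity when v x = v y) *)
Definition alpha_le (d : nat) (v : R -> vec) (x r : R) : Prop :=
  forall eps delta, eps > 0 -> delta > 0 ->
    exists y, 0 <= y <= 1 /\ 0 < Rabs (y - x) < delta /\
      norm d (vsub (v x) (v y)) > 0 /\
      ln (norm d (vsub (v x) (v y))) / ln (Rabs (x - y)) < r + eps.

Definition prob_vector (N : nat) (lam : nat -> R) : Prop :=
  (forall i, (i < N)%nat -> lam i > 0) /\ rsum N lam = 1.

Definition v_continuous (d : nat) (v : R -> vec) : Prop :=
  forall x, 0 <= x <= 1 -> forall eps, eps > 0 -> exists delta, delta > 0 /\
    forall y, 0 <= y <= 1 -> Rabs (y - x) < delta -> norm d (vsub (v y) (v x)) < eps.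

Definition v_equation (d N : nat) (A : nat -> mat) (t : nat -> vec) (lam : nat -> R)
    (v : R -> vec) : Prop :=
  forall i, (i < N)%nat -> forall x, gam lam i <= x <= gam lam i + lam i ->
    veq d (v x) (faff d A t i (v ((x - gam lam i) / lam i))).

(* Main.v *)
Require Import Defs.
From Stdlib Require Import Reals List ClassicalEpsilon Lra Lia Psatz FunctionalExtensionality Classical.
Open Scope R_scope.

Lemma rsum_ext n f g : (forall k, (k < n)%nat -> f k = g k) -> rsum n f = rsum n g.
Proof. induction n; simpl; intros H; [reflexivity|]. rewrite IHn by (intros; apply H; lia). rewrite H by lia. reflexivity. Qed.

Lemma rsum_plus n f g : rsum n (fun k => f k + g k) = rsum n f + rsum n g.
Proof. induction n; simpl; [lra|]. rewrite IHn; lra. Qed.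

Lemma rsum_scal n c f : rsum n (fun k => c * f k) = c * rsum n f.
Proof. induction n; simpl; [lra|]. rewrite IHn; lra. Qed.

Lemma rsum_minus n f g : rsum n (fun k => f k - g k) = rsum n f - rsum n g.
Proof. induction n; simpl; [lra|]. rewrite IHn; lra. Qed.

Lemma rsum_le n f g : (forall k, (k < n)%nat -> f k <= g k) -> rsum n f <= rsum n g.
Proof. induction n; simpl; intros H; [lra|]. assert (H1 := H n ltac:(lia)). assert (H2 : rsum n f <= rsum n g) by (apply IHn; intros; apply H; lia). lra. Qed.

Lemma rsum_nonneg n f : (forall k, (k < n)%nat -> 0 <= f k) -> 0 <= rsum n f.
Proof. intros H. replace 0 with (rsum n (fun _ => 0)). apply rsum_le; auto. induction n; simpl; auto. rewrite IHn; [lra|]. intros; apply H; lia. Qed.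

Lemma rsum_zero n : rsum n (fun _ => 0) = 0.
Proof. induction n; simpl; [lra|]. rewrite IHn; lra. Qed.

Lemma rsum_swap n m (f : nat -> nat -> R) :
  rsum n (fun i => rsum m (fun j => f i j)) = rsum m (fun j => rsum n (fun i => f i j)).
Proof.
  induction n; simpl. { rewrite rsum_zero; reflexivity. }
  rewrite IHn. rewrite <- rsum_plus. reflexivity.
Qed.

Lemma rsum_abs n f : Rabs (rsum n f) <= rsum n (fun k => Rabs (f k)).
Proof. induction n; simpl. { rewrite Rabs_R0; lra. } eapply Rle_trans. apply Rabs_triang. lra. Qed.

Lemma rsum_mono n m f : (n <= m)%nat -> (forall k, (k < m)%nat -> 0 <= f k) -> rsum n f <= rsum m f.
Proof.
  intros H Hf. induction H; [lra|]. simpl. assert (0 <= f m) by (apply Hf; lia).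
  assert (rsum n f <= rsum m f) by (apply IHle; intros; apply Hf; lia). lra.
Qed.

Lemma Rabs_le_inv' a b : Rabs a <= b -> -b <= a <= b.
Proof. unfold Rabs; destruct Rcase_abs; intros; lra. Qed.

Lemma dot_sym d x y : dot d x y = dot d y x.
Proof. unfold dot; apply rsum_ext; intros; ring. Qed.

Lemma dot_nonneg d x : 0 <= dot d x x.
Proof. unfold dot; apply rsum_nonneg; intros; nra. Qed.

Lemma norm_nonneg d x : 0 <= norm d x.
Proof. apply sqrt_pos. Qed.

Lemma norm_sq d x : norm d x * norm d x = dot d x x.
Proof. unfold norm; apply sqrt_sqrt, dot_nonneg. Qed.

Lemma dot_ext d x x' y y' : veq d x x' -> veq d y y' -> dot d x y = dot d x' y'.
Proof. intros H1 H2; unfold dot; apply rsum_ext; intros; rewrite H1, H2 by auto; ring. Qed.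

Lemma norm_ext d x y : veq d x y -> norm d x = norm d y.
Proof. intros H; unfold norm; rewrite (dot_ext d x y x y); auto. Qed.

Lemma dot_add_l d x y z : dot d (vadd x y) z = dot d x z + dot d y z.
Proof. unfold dot, vadd; rewrite <- rsum_plus; apply rsum_ext; intros; ring. Qed.
Lemma dot_sub_l d x y z : dot d (vsub x y) z = dot d x z - dot d y z.
Proof. unfold dot, vsub; rewrite <- rsum_minus; apply rsum_ext; intros; ring. Qed.
Lemma dot_scal_l d c x z : dot d (scal c x) z = c * dot d x z.
Proof. unfold dot, scal; rewrite <- rsum_scal; apply rsum_ext; intros; ring. Qed.

Lemma cauchy_schwarz_sq d x y : dot d x y * dot d x y <= dot d x x * dot d y y.
Proof.
  assert (Hq : forall tt, 0 <= dot d x x + 2 * tt * dot d x y + tt * tt * dot d y y).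
  { intros tt. assert (H := dot_nonneg d (vadd x (scal tt y))).
    replace (dot d (vadd x (scal tt y)) (vadd x (scal tt y))) with
      (dot d x x + 2 * tt * dot d x y + tt * tt * dot d y y) in H; [exact H|].
    unfold dot, vadd, scal. rewrite <- !rsum_scal, <- !rsum_plus. apply rsum_ext; intros; ring. }
  assert (Hx := dot_nonneg d x). assert (Hy := dot_nonneg d y).
  destruct (Req_dec (dot d y y) 0) as [E|E].
  - assert (dot d x y = 0).
    { destruct (Req_dec (dot d x y) 0) as [|Z]; auto.
      assert (H := Hq (- (dot d x x + 1) / (2 * dot d x y))). rewrite E in H.
      replace (dot d x x + 2 * (- (dot d x x + 1) / (2 * dot d x y)) * dot d x y +
        - (dot d x x + 1) / (2 * dot d x y) * (- (dot d x x + 1) / (2 * dot d x y)) * 0) with (-1) in H by (field; auto).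
      lra. }
    rewrite H, E; nra.
  - assert (H := Hq (- dot d x y / dot d y y)).
    assert (0 < dot d y y) by lra.
    replace (dot d x x + 2 * (- dot d x y / dot d y y) * dot d x y +
       - dot d x y / dot d y y * (- dot d x y / dot d y y) * dot d y y)
    with ((dot d x x * dot d y y - dot d x y * dot d x y) / dot d y y) in H by (field; lra).
    assert (0 <= dot d x x * dot d y y - dot d x y * dot d x y).
    { apply Rmult_le_reg_r with (/ dot d y y). apply Rinv_0_lt_compat; lra. rewrite Rmult_0_l. exact H. }
    lra.
Qed.

Lemma cauchy_schwarz d x y : Rabs (dot d x y) <= norm d x * norm d y.
Proof.
  assert (H0 : 0 <= norm d x * norm d y) by (apply Rmult_le_pos; apply norm_nonneg).
  assert (H := cauchy_schwarz_sq d x y). rewrite <- (norm_sq d x), <- (norm_sq d y) in H.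
  assert (H1 : Rabs (dot d x y) * Rabs (dot d x y) = dot d x y * dot d x y) by (rewrite <- Rabs_mult; apply Rabs_pos_eq; nra).
  pose proof (Rabs_pos (dot d x y)). nra.
Qed.

Lemma sqrt_le_of_sq a b : 0 <= b -> 0 <= a -> a * a <= b * b -> a <= b.
Proof. intros. nra. Qed.

Lemma norm_triang d x y : norm d (vadd x y) <= norm d x + norm d y.
Proof.
  apply sqrt_le_of_sq. pose proof (norm_nonneg d x); pose proof (norm_nonneg d y); lra. apply norm_nonneg.
  rewrite norm_sq. rewrite dot_add_l, !(dot_sym d _ (vadd x y)), !dot_add_l.
  rewrite (dot_sym d y x). assert (H := cauchy_schwarz d x y). apply Rabs_le_inv' in H.
  rewrite <- (norm_sq d x), <- (norm_sq d y). nra.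
Qed.

Lemma norm_scal d c x : norm d (scal c x) = Rabs c * norm d x.
Proof.
  unfold norm. rewrite dot_scal_l, dot_sym, dot_scal_l.
  replace (c * (c * dot d x x)) with (Rsqr c * dot d x x) by (unfold Rsqr; ring).
  rewrite sqrt_mult_alt by apply Rle_0_sqr. rewrite sqrt_Rsqr_abs. reflexivity.
Qed.

Lemma vsub_eq_vadd x y : vsub x y = vadd x (scal (-1) y).
Proof. apply functional_extensionality; intros k; unfold vsub, vadd, scal; ring. Qed.

Lemma norm_sub_triang d x y : norm d (vsub x y) <= norm d x + norm d y.
Proof. rewrite vsub_eq_vadd. eapply Rle_trans. apply norm_triang. rewrite norm_scal. replace (Rabs (-1)) with 1 by (rewrite Rabs_left; lra). lra. Qed.

Lemma norm_vsub_sym d x y : norm d (vsub x y) = norm d (vsub y x).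
Proof.
  replace (vsub x y) with (scal (-1) (vsub y x)). rewrite norm_scal. replace (Rabs (-1)) with 1 by (rewrite Rabs_left; lra). ring.
  apply functional_extensionality; intros k; unfold vsub, scal; ring.
Qed.

Lemma norm_vsub_triang d x y z : norm d (vsub x z) <= norm d (vsub x y) + norm d (vsub y z).
Proof.
  replace (vsub x z) with (vadd (vsub x y) (vsub y z)). apply norm_triang.
  apply functional_extensionality; intros k; unfold vsub, vadd; ring.
Qed.

Lemma norm_rev_triang d x y : Rabs (norm d x - norm d y) <= norm d (vsub x y).
Proof.
  assert (H1 : norm d x <= norm d (vsub x y) + norm d y).
  { replace x with (vadd (vsub x y) y) at 1. apply norm_triang.
    apply functional_extensionality; intros k; unfold vsub, vadd; ring. }
  assert (H2 : norm d y <= norm d (vsub x y) + norm d x).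
  { replace y with (vadd (vsub y x) x) at 1. rewrite <- norm_vsub_sym. apply norm_triang.
    apply functional_extensionality; intros k; unfold vsub, vadd; ring. }
  apply Rabs_le; lra.
Qed.

Lemma coord_le_norm d x k : (k < d)%nat -> Rabs (x k) <= norm d x.
Proof.
  intros Hk. apply sqrt_le_of_sq. apply norm_nonneg. apply Rabs_pos.
  rewrite norm_sq. rewrite <- Rabs_mult, Rabs_pos_eq by nra. unfold dot.
  induction d. lia. simpl. destruct (Nat.eq_dec k d).
  - subst k. assert (0 <= rsum d (fun k0 => x k0 * x k0)) by (apply rsum_nonneg; intros; nra). lra.
  - assert (x d * x d >= 0) by nra. assert (x k * x k <= rsum d (fun k0 => x k0 * x k0)) by (apply IHd; lia). lra.
Qed.

Lemma norm_le_sum_abs d x : norm d x <= rsum d (fun k => Rabs (x k)).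
Proof.
  apply sqrt_le_of_sq. apply rsum_nonneg; intros; apply Rabs_pos. apply norm_nonneg.
  rewrite norm_sq. unfold dot. induction d; simpl. lra.
  assert (0 <= rsum d (fun k => Rabs (x k))) by (apply rsum_nonneg; intros; apply Rabs_pos).
  assert (Rabs (x d) * Rabs (x d) = x d * x d) by (rewrite <- Rabs_mult; apply Rabs_pos_eq; nra).
  pose proof (Rabs_pos (x d)). nra.
Qed.

Lemma norm_zero_veq d x y : norm d (vsub x y) = 0 -> veq d x y.
Proof.
  intros H k Hk. assert (H1 := coord_le_norm d (vsub x y) k Hk). rewrite H in H1.
  unfold vsub in H1. assert (Rabs (x k - y k) = 0) by (pose proof (Rabs_pos (x k - y k)); lra).
  unfold Rabs in H0; destruct Rcase_abs in H0; lra.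
Qed.

Lemma veq_norm_zero d x y : veq d x y -> norm d (vsub x y) = 0.
Proof.
  intros H. rewrite (norm_ext d (vsub x y) (fun _ => 0)). unfold norm, dot. rewrite rsum_ext with (g := fun _ => 0).
  rewrite rsum_zero; apply sqrt_0. intros; ring. intros k Hk; unfold vsub; rewrite H; auto; ring.
Qed.

Lemma veq_refl d x : veq d x x. Proof. intros k _; reflexivity. Qed.
Lemma veq_sym d x y : veq d x y -> veq d y x. Proof. intros H k Hk; symmetry; auto. Qed.
Lemma veq_trans d x y z : veq d x y -> veq d y z -> veq d x z. Proof. intros H1 H2 k Hk; rewrite H1; auto. Qed.
Lemma matvec_ext d A x y : veq d x y -> matvec d A x = matvec d A y.
Proof. intros H; apply functional_extensionality; intros i; unfold matvec; apply rsum_ext; intros; rewrite H; auto. Qed.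

Lemma matvec_vsub d A x y : matvec d A (vsub x y) = vsub (matvec d A x) (matvec d A y).
Proof. apply functional_extensionality; intros i; unfold matvec, vsub; rewrite <- rsum_minus; apply rsum_ext; intros; ring. Qed.
Lemma matvec_vadd d A x y : matvec d A (vadd x y) = vadd (matvec d A x) (matvec d A y).
Proof. apply functional_extensionality; intros i; unfold matvec, vadd; rewrite <- rsum_plus; apply rsum_ext; intros; ring. Qed.
Lemma matvec_scal d A c x : matvec d A (scal c x) = scal c (matvec d A x).
Proof. apply functional_extensionality; intros i; unfold matvec, scal; rewrite <- rsum_scal; apply rsum_ext; intros; ring. Qed.

Lemma matvec_matmul d A B x : matvec d (matmul d A B) x = matvec d A (matvec d B x).
Proof.
  apply functional_extensionality; intros i; unfold matvec, matmul.
  transitivity (rsum d (fun j => rsum d (fun k => A i k * B k j * x j))).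
  - apply rsum_ext; intros. rewrite Rmult_comm, <- rsum_scal. apply rsum_ext; intros; ring.
  - rewrite rsum_swap. apply rsum_ext; intros. rewrite <- rsum_scal. apply rsum_ext; intros; ring.
Qed.

Lemma rsum_idm n i x : rsum n (fun k => idm i k * x k) = if Nat.ltb i n then x i else 0.
Proof.
  induction n; simpl. { destruct i; reflexivity. } rewrite IHn. unfold idm.
  destruct (Nat.eqb_spec i n); destruct (Nat.ltb_spec i n); destruct (Nat.ltb_spec i (S n)); subst; try lia; ring.
Qed.

Lemma matvec_idm d x : veq d (matvec d idm x) x.
Proof. intros i Hi; unfold matvec; rewrite rsum_idm. destruct (Nat.ltb_spec i d); [reflexivity|lia]. Qed.

Lemma matvec_matw_app d A w1 w2 x :
  veq d (matvec d (matw d A (w1 ++ w2)) x) (matvec d (matw d A w1) (matvec d (matw d A w2) x)).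
Proof.
  induction w1; simpl.
  - apply veq_sym, matvec_idm.
  - rewrite !matvec_matmul. rewrite (matvec_ext d (A a) _ _ IHw1). apply veq_refl.
Qed.

Lemma faff_sub d A t i x y : vsub (faff d A t i x) (faff d A t i y) = matvec d (A i) (vsub x y).
Proof. rewrite matvec_vsub. apply functional_extensionality; intros k; unfold faff, vsub, vadd; ring. Qed.

Lemma faff_ext d A t i x y : veq d x y -> faff d A t i x = faff d A t i y.
Proof. intros H; unfold faff; rewrite (matvec_ext d _ x y H); reflexivity. Qed.

Lemma fw_ext d A t w x y : veq d x y -> veq d (fw d A t w x) (fw d A t w y).
Proof.
  intros H; induction w; simpl; auto. rewrite (faff_ext d A t a _ _ IHw). apply veq_refl.
Qed.

Lemma fw_app d A t w1 w2 x : fw d A t (w1 ++ w2) x = fw d A t w1 (fw d A t w2 x).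
Proof. unfold fw; apply fold_right_app. Qed.

Lemma fw_sub d A t w x y : veq d (vsub (fw d A t w x) (fw d A t w y)) (matvec d (matw d A w) (vsub x y)).
Proof.
  induction w; simpl.
  - apply veq_sym, matvec_idm.
  - rewrite faff_sub, matvec_matmul, (matvec_ext d _ _ _ IHw). apply veq_refl.
Qed.

Definition zv : vec := fun _ => 0.

Lemma lin_contr d A t i : contraction d (faff d A t i) ->
  exists c, 0 <= c < 1 /\ forall x, norm d (matvec d (A i) x) <= c * norm d x.
Proof.
  intros [c [Hc H]]. exists c; split; auto. intros x.
  specialize (H x zv). rewrite faff_sub in H.
  replace (vsub x zv) with x in H; auto.
  apply functional_extensionality; intros; unfold vsub, zv; ring.
Qed.

Lemma finite_max N (Q : nat -> R -> Prop) :
  (forall i c c', Q i c -> c <= c' -> Q i c') ->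
  (forall i, (i < N)%nat -> exists c, 0 <= c < 1 /\ Q i c) ->
  exists c, 0 <= c < 1 /\ forall i, (i < N)%nat -> Q i c.
Proof.
  intros Hm. induction N; intros H.
  - exists 0; split; [lra| intros; lia].
  - destruct IHN as [c1 [Hc1 H1]]. { intros; apply H; lia. }
    destruct (H N ltac:(lia)) as [c2 [Hc2 H2]].
    exists (Rmax c1 c2). split. { split. eapply Rle_trans; [|apply Rmax_l]; lra. apply Rmax_lub_lt; lra. }
    intros i Hi. destruct (Nat.eq_dec i N).
    + subst. eapply Hm; eauto. apply Rmax_r.
    + eapply Hm. apply H1; lia. apply Rmax_l.
Qed.

Lemma finite_min N (Q : nat -> R -> Prop) :
  (forall i c c', Q i c -> 0 < c' <= c -> Q i c') ->
  (forall i, (i < N)%nat -> exists c, 0 < c /\ Q i c) ->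
  exists c, 0 < c /\ forall i, (i < N)%nat -> Q i c.
Proof.
  intros Hm. induction N; intros H.
  - exists 1; split; [lra| intros; lia].
  - destruct IHN as [c1 [Hc1 H1]]. { intros; apply H; lia. }
    destruct (H N ltac:(lia)) as [c2 [Hc2 H2]].
    exists (Rmin c1 c2). split. { apply Rmin_glb_lt; lra. }
    intros i Hi. destruct (Nat.eq_dec i N).
    + subst. eapply Hm; eauto. split. apply Rmin_glb_lt; lra. apply Rmin_r.
    + eapply Hm. apply H1; lia. split. apply Rmin_glb_lt; lra. apply Rmin_l.
Qed.

Lemma unif_contr d N A t : (forall i, (i < N)%nat -> contraction d (faff d A t i)) ->
  exists c, 0 <= c < 1 /\ forall i, (i < N)%nat -> forall x, norm d (matvec d (A i) x) <= c * norm d x.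
Proof.
  intros H. apply finite_max.
  - intros i c c' Hq Hc x. eapply Rle_trans. apply Hq. apply Rmult_le_compat_r; auto. apply norm_nonneg.
  - intros i Hi. apply (lin_contr d A t i (H i Hi)).
Qed.

Lemma matw_contr d N A c : 0 <= c ->
  (forall i, (i < N)%nat -> forall x, norm d (matvec d (A i) x) <= c * norm d x) ->
  forall w, Forall (fun i => (i < N)%nat) w -> forall x,
  norm d (matvec d (matw d A w) x) <= c ^ length w * norm d x.
Proof.
  intros Hc H w Hw. induction Hw as [|a w Ha Hw IH]; intros x; simpl.
  - rewrite (norm_ext d _ x (matvec_idm d x)). lra.
  - rewrite matvec_matmul. eapply Rle_trans. apply H; auto. rewrite Rmult_assoc.
    apply Rmult_le_compat_l; auto.
Qed.

Lemma restr_Forall N s n : in_Sigma N s -> Forall (fun i => (i < N)%nat) (restr s n).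
Proof. intros H. apply Forall_forall. intros x Hx. unfold restr in Hx. apply in_map_iff in Hx. destruct Hx as [k [<- _]]. apply H. Qed.

Lemma restr_length s n : length (restr s n) = n.
Proof. unfold restr. rewrite length_map, length_seq. reflexivity. Qed.

Lemma restr_S s n : restr s (S n) = restr s n ++ s n :: nil.
Proof. unfold restr. rewrite seq_S, map_app. reflexivity. Qed.

Lemma restr_S' s n : restr s (S n) = s 0%nat :: restr (shift 1 s) n.
Proof.
  unfold restr, shift. simpl. f_equal. rewrite <- seq_shift, map_map.
  apply map_ext; intros; f_equal; lia.
Qed.

Definition opset d A := fun y => exists x, norm d x <= 1 /\ y = norm d (matvec d A x).

Lemma matvec_bound d A : exists K, 0 <= K /\ forall x, norm d (matvec d A x) <= K * norm d x.
Proof.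
  exists (rsum d (fun i => rsum d (fun k => Rabs (A i k)))). split.
  { apply rsum_nonneg; intros; apply rsum_nonneg; intros; apply Rabs_pos. }
  intros x. eapply Rle_trans. apply norm_le_sum_abs.
  rewrite Rmult_comm, <- rsum_scal. apply rsum_le; intros i Hi.
  unfold matvec. eapply Rle_trans. apply rsum_abs. rewrite <- rsum_scal. apply rsum_le; intros k Hk.
  rewrite Rabs_mult. rewrite Rmult_comm. apply Rmult_le_compat_r. apply Rabs_pos. apply coord_le_norm; auto.
Qed.

Lemma opnorm_lub d A : is_lub (opset d A) (opnorm d A).
Proof.
  unfold opnorm. apply epsilon_spec.
  destruct (matvec_bound d A) as [K [HK HKb]].
  assert (Hb : bound (opset d A)).
  { exists K. intros y [x [Hx ->]]. eapply Rle_trans. apply HKb. nra. }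
  assert (He : exists y, opset d A y).
  { exists (norm d (matvec d A zv)). exists zv. split; auto.
    replace (norm d zv) with 0. lra. unfold norm, dot, zv. rewrite rsum_ext with (g := fun _ => 0). rewrite rsum_zero, sqrt_0; auto. intros; ring. }
  destruct (completeness _ Hb He) as [m Hm]. exists m. exact Hm.
Qed.

Lemma opnorm_ub d A x : norm d x <= 1 -> norm d (matvec d A x) <= opnorm d A.
Proof. intros H. apply (proj1 (opnorm_lub d A)). exists x; auto. Qed.

Lemma opnorm_least d A B : (forall x, norm d x <= 1 -> norm d (matvec d A x) <= B) -> opnorm d A <= B.
Proof. intros H. apply (proj2 (opnorm_lub d A)). intros y [x [Hx ->]]. auto. Qed.

Lemma opnorm_ge d A x : norm d (matvec d A x) <= opnorm d A * norm d x.
Proof.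
  destruct (Rle_lt_dec (norm d x) 0) as [H|H].
  - assert (norm d x = 0) by (pose proof (norm_nonneg d x); lra).
    assert (veq d x zv). { apply norm_zero_veq. rewrite <- H0. apply norm_ext. intros k Hk; unfold vsub, zv; ring. }
    rewrite (matvec_ext d A x zv H1). replace (matvec d A zv) with zv.
    replace (norm d zv) with 0. rewrite H0; lra. unfold norm, dot, zv. rewrite rsum_ext with (g := fun _ => 0). rewrite rsum_zero, sqrt_0; auto. intros; ring.
    apply functional_extensionality; intros; unfold matvec, zv. rewrite rsum_ext with (g := fun _ => 0). rewrite rsum_zero; auto. intros; ring.
  - assert (H1 := opnorm_ub d A (scal (/ norm d x) x)).
    rewrite norm_scal, matvec_scal, norm_scal, Rabs_pos_eq in H1 by (left; apply Rinv_0_lt_compat; auto).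
    rewrite Rinv_l in H1 by lra. specialize (H1 (Rle_refl _)).
    apply Rmult_le_reg_l with (/ norm d x). apply Rinv_0_lt_compat; auto.
    replace (/ norm d x * (opnorm d A * norm d x)) with (opnorm d A) by (field; lra). exact H1.
Qed.
Fixpoint ps (lam : nat -> R) (n : nat) (s : nat -> nat) : R :=
  match n with O => 0 | S n => gam lam (s 0%nat) + lam (s 0%nat) * ps lam n (shift 1 s) end.

Lemma shift_S k s : shift k (shift 1 s) = shift (S k) s.
Proof. apply functional_extensionality; intros j; unfold shift; f_equal; lia. Qed.

Lemma shift_0 s : shift 0 s = s.
Proof. apply functional_extensionality; intros j; unfold shift; f_equal; lia. Qed.

Lemma Sigma_shift N s k : in_Sigma N s -> in_Sigma N (shift k s).
Proof. intros H j; apply H. Qed.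

Lemma lamw_restr_S' lam s n : lamw lam (restr s (S n)) = lam (s 0%nat) * lamw lam (restr (shift 1 s) n).
Proof. rewrite restr_S'. reflexivity. Qed.

Lemma lamw_app lam w1 w2 : lamw lam (w1 ++ w2) = lamw lam w1 * lamw lam w2.
Proof. induction w1; simpl. ring. rewrite IHw1; ring. Qed.

Lemma ps_S_r lam n s : ps lam (S n) s = ps lam n s + lamw lam (restr s n) * gam lam (s n).
Proof.
  revert s; induction n; intros s.
  - simpl. unfold restr; simpl. ring.
  - change (ps lam (S (S n)) s) with (gam lam (s 0%nat) + lam (s 0%nat) * ps lam (S n) (shift 1 s)).
    rewrite IHn. rewrite lamw_restr_S'. simpl.
    replace (shift 1 s n) with (s (S n)) by (unfold shift; f_equal; lia). ring.
Qed.

Lemma sum_ps lam s n : sum_f_R0 (fun m => lamw lam (restr s m) * gam lam (s m)) n = ps lam (S n) s.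
Proof.
  induction n. { simpl. unfold restr; simpl. ring. }
  simpl sum_f_R0. rewrite IHn. rewrite (ps_S_r lam (S n)). reflexivity.
Qed.

Lemma gam_bounds N lam : prob_vector N lam -> forall i, (i < N)%nat ->
  0 <= gam lam i /\ gam lam i + lam i <= 1.
Proof.
  intros [Hp Hs] i Hi. unfold gam. split.
  - apply rsum_nonneg; intros; left; apply Hp; lia.
  - change (rsum i lam + lam i) with (rsum (S i) lam). rewrite <- Hs.
    apply rsum_mono; [lia|]. intros; left; apply Hp; auto.
Qed.

Lemma lam_pos N lam : prob_vector N lam -> forall i, (i < N)%nat -> 0 < lam i.
Proof. intros [Hp _] i Hi; apply Hp; auto. Qed.

Lemma lamw_bounds N lam : prob_vector N lam -> forall w, Forall (fun i => (i < N)%nat) w ->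
  0 < lamw lam w <= 1.
Proof.
  intros H w Hw. induction Hw; simpl. lra.
  pose proof (gam_bounds N lam H x H0). pose proof (lam_pos N lam H x H0). nra.
Qed.

Lemma ps_bounds N lam : prob_vector N lam -> forall n s, in_Sigma N s ->
  0 <= ps lam n s /\ ps lam n s + lamw lam (restr s n) <= 1.
Proof.
  intros H n. induction n; intros s Hs.
  - simpl. unfold restr; simpl; lra.
  - simpl ps. rewrite lamw_restr_S'. destruct (IHn (shift 1 s) (Sigma_shift N s 1 Hs)).
    pose proof (gam_bounds N lam H (s 0%nat) (Hs 0%nat)). pose proof (lam_pos N lam H (s 0%nat) (Hs 0%nat)). nra.
Qed.

Lemma ps_grow N lam : prob_vector N lam -> forall s, in_Sigma N s -> Un_growing (fun n => ps lam n s).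
Proof.
  intros H s Hs n. rewrite ps_S_r.
  pose proof (lamw_bounds N lam H (restr s n) (restr_Forall N s n Hs)).
  pose proof (gam_bounds N lam H (s n) (Hs n)). nra.
Qed.

Lemma pi_cv N lam : prob_vector N lam -> forall s, in_Sigma N s -> Un_cv (fun n => ps lam n s) (pi_sym lam s).
Proof.
  intros H s Hs.
  destruct (growing_cv (fun n => ps lam n s) (ps_grow N lam H s Hs)) as [l Hl].
  { exists 1. intros x [i ->]. pose proof (ps_bounds N lam H i s Hs).
    pose proof (lamw_bounds N lam H (restr s i) (restr_Forall N s i Hs)). lra. }
  assert (Hinf : infinite_sum (fun n => lamw lam (restr s n) * gam lam (s n)) l).
  { intros eps Heps. destruct (Hl eps Heps) as [n0 Hn0]. exists n0. intros n Hn.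
    rewrite sum_ps. apply Hn0. lia. }
  assert (Hpi : infinite_sum (fun n => lamw lam (restr s n) * gam lam (s n)) (pi_sym lam s)).
  { unfold pi_sym. apply epsilon_spec. exists l; auto. }
  rewrite (uniqueness_sum _ _ _ Hpi Hinf). exact Hl.
Qed.

Lemma Un_cv_affine u l a b : Un_cv u l -> Un_cv (fun n => a + b * u n) (a + b * l).
Proof.
  intros H eps Heps. destruct (H (eps / (Rabs b + 1))) as [n0 Hn0].
  { apply Rdiv_lt_0_compat; auto. pose proof (Rabs_pos b); lra. }
  exists n0; intros n Hn. specialize (Hn0 n Hn). unfold R_dist in *.
  replace (a + b * u n - (a + b * l)) with (b * (u n - l)) by ring. rewrite Rabs_mult.
  pose proof (Rabs_pos b). pose proof (Rabs_pos (u n - l)).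
  apply Rle_lt_trans with ((Rabs b + 1) * Rabs (u n - l)). nra.
  replace eps with ((Rabs b + 1) * (eps / (Rabs b + 1))) by (field; lra).
  apply Rmult_lt_compat_l; lra.
Qed.

Lemma Un_cv_S u l : Un_cv u l -> Un_cv (fun n => u (S n)) l.
Proof. intros H eps Heps. destruct (H eps Heps) as [n0 Hn0]. exists n0; intros n Hn; apply Hn0; lia. Qed.

Lemma Un_cv_le u l b : (forall n, u n <= b) -> Un_cv u l -> l <= b.
Proof.
  intros Hb H. destruct (Rle_lt_dec l b) as [|Hlt]; auto.
  destruct (H (l - b)) as [n0 Hn0]. lra. specialize (Hn0 n0 (le_n _)). specialize (Hb n0).
  unfold R_dist in Hn0. apply Rabs_def2 in Hn0. lra.
Qed.

Lemma Un_cv_ge u l b : (forall n, b <= u n) -> Un_cv u l -> b <= l.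
Proof.
  intros Hb H. destruct (Rle_lt_dec b l) as [|Hlt]; auto.
  destruct (H (b - l)) as [n0 Hn0]. lra. specialize (Hn0 n0 (le_n _)). specialize (Hb n0).
  unfold R_dist in Hn0. apply Rabs_def2 in Hn0. lra.
Qed.

Lemma pi_range N lam : prob_vector N lam -> forall s, in_Sigma N s -> 0 <= pi_sym lam s <= 1.
Proof.
  intros H s Hs. split.
  - apply (Un_cv_ge _ _ 0 (fun n => proj1 (ps_bounds N lam H n s Hs)) (pi_cv N lam H s Hs)).
  - apply (Un_cv_le (fun n => ps lam n s)); [|apply (pi_cv N lam H s Hs)].
    intros n. pose proof (ps_bounds N lam H n s Hs).
    pose proof (lamw_bounds N lam H (restr s n) (restr_Forall N s n Hs)). lra.
Qed.

Lemma pi_step N lam : prob_vector N lam -> forall s, in_Sigma N s ->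
  pi_sym lam s = gam lam (s 0%nat) + lam (s 0%nat) * pi_sym lam (shift 1 s).
Proof.
  intros H s Hs. apply (UL_sequence (fun n => ps lam (S n) s)).
  - apply (Un_cv_S (fun n => ps lam n s)), (pi_cv N lam H s Hs).
  - apply (Un_cv_affine (fun n => ps lam n (shift 1 s))). apply (pi_cv N lam H), Sigma_shift; auto.
Qed.

Lemma pi_iter N lam : prob_vector N lam -> forall k s, in_Sigma N s ->
  pi_sym lam s = ps lam k s + lamw lam (restr s k) * pi_sym lam (shift k s).
Proof.
  intros H k. induction k; intros s Hs.
  - simpl. rewrite shift_0. unfold restr; simpl; ring.
  - rewrite (pi_step N lam H s Hs). rewrite (IHk (shift 1 s) (Sigma_shift N s 1 Hs)).
    rewrite shift_S, lamw_restr_S'. simpl ps. ring.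
Qed.

Definition conc (k : nat) (s j : nat -> nat) : nat -> nat :=
  fun n => if Nat.ltb n k then s n else j (n - k)%nat.

Lemma conc_Sigma N k s j : in_Sigma N s -> in_Sigma N j -> in_Sigma N (conc k s j).
Proof. intros H1 H2 n; unfold conc; destruct (Nat.ltb n k); auto. Qed.

Lemma conc_restr k s j : restr (conc k s j) k = restr s k.
Proof.
  unfold restr. apply map_ext_in. intros a Ha. apply in_seq in Ha. unfold conc.
  destruct (Nat.ltb_spec a k); [reflexivity|lia].
Qed.

Lemma conc_shift k s j : shift k (conc k s j) = j.
Proof.
  apply functional_extensionality; intros n; unfold shift, conc.
  destruct (Nat.ltb_spec (n + k) k); [lia|]. f_equal; lia.
Qed.

Lemma ps_ext lam k s s' : (forall m, (m < k)%nat -> s m = s' m) -> ps lam k s = ps lam k s'.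
Proof.
  revert s s'; induction k; intros s s' H; simpl; auto.
  rewrite (H 0%nat) by lia. rewrite (IHk (shift 1 s) (shift 1 s')); auto.
  intros m Hm; unfold shift; apply H; lia.
Qed.

Lemma pi_conc N lam : prob_vector N lam -> forall k s j, in_Sigma N s -> in_Sigma N j ->
  pi_sym lam (conc k s j) = ps lam k s + lamw lam (restr s k) * pi_sym lam j.
Proof.
  intros H k s j Hs Hj. rewrite (pi_iter N lam H k) by (apply conc_Sigma; auto).
  rewrite conc_restr, conc_shift. f_equal. apply ps_ext. intros m Hm; unfold conc.
  destruct (Nat.ltb_spec m k); [reflexivity|lia].
Qed.
Lemma v_step d N A t lam v : prob_vector N lam -> v_equation d N A t lam v ->
  forall s, in_Sigma N s ->
  veq d (v (pi_sym lam s)) (faff d A t (s 0%nat) (v (pi_sym lam (shift 1 s)))).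
Proof.
  intros Hl Hv s Hs. pose proof (pi_step N lam Hl s Hs) as E.
  pose proof (pi_range N lam Hl (shift 1 s) (Sigma_shift N s 1 Hs)).
  pose proof (lam_pos N lam Hl (s 0%nat) (Hs 0%nat)).
  assert (Hb : gam lam (s 0%nat) <= pi_sym lam s <= gam lam (s 0%nat) + lam (s 0%nat)) by (rewrite E; nra).
  pose proof (Hv (s 0%nat) (Hs 0%nat) _ Hb) as Hq.
  replace ((pi_sym lam s - gam lam (s 0%nat)) / lam (s 0%nat)) with (pi_sym lam (shift 1 s)) in Hq; auto.
  rewrite E; field; lra.
Qed.

Lemma v_iter d N A t lam v : prob_vector N lam -> v_equation d N A t lam v ->
  forall k s, in_Sigma N s ->
  veq d (v (pi_sym lam s)) (fw d A t (restr s k) (v (pi_sym lam (shift k s)))).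
Proof.
  intros Hl Hv k. induction k; intros s Hs.
  - rewrite shift_0. unfold restr; simpl. apply veq_refl.
  - rewrite restr_S'. simpl fw. eapply veq_trans. apply (v_step d N A t lam v Hl Hv s Hs).
    rewrite (faff_ext d A t (s 0%nat) _ _ (IHk (shift 1 s) (Sigma_shift N s 1 Hs))).
    rewrite shift_S. apply veq_refl.
Qed.

Definition clamp (x : R) := Rmax 0 (Rmin x 1).

Lemma clamp_range x : 0 <= clamp x <= 1.
Proof. unfold clamp, Rmax, Rmin. destruct (Rle_dec x 1); destruct Rle_dec; lra. Qed.

Lemma clamp_id x : 0 <= x <= 1 -> clamp x = x.
Proof. intros H. unfold clamp, Rmax, Rmin. destruct (Rle_dec x 1); destruct Rle_dec; lra. Qed.

Lemma clamp_lip x y : Rabs (clamp x - clamp y) <= Rabs (x - y).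
Proof.
  unfold clamp, Rmax, Rmin. destruct (Rle_dec x 1); destruct (Rle_dec y 1);
  repeat (destruct Rle_dec); unfold Rabs; repeat destruct Rcase_abs; lra.
Qed.

Lemma v_bounded d v : v_continuous d v -> exists Bv, 0 <= Bv /\ forall x, 0 <= x <= 1 -> norm d (v x) <= Bv.
Proof.
  intros Hc. set (g := fun x => norm d (v (clamp x))).
  assert (Hg : forall c, 0 <= c <= 1 -> continuity_pt g c).
  { intros c _. unfold continuity_pt, continue_in, limit1_in, limit_in. simpl. unfold R_dist.
    intros eps Heps. destruct (Hc (clamp c) (clamp_range c) eps Heps) as [del [Hdel Hd]].
    exists del; split; auto. intros x [_ Hx]. unfold g.
    eapply Rle_lt_trans. apply norm_rev_triang. apply Hd. apply clamp_range.
    eapply Rle_lt_trans. apply clamp_lip. auto. }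
  destruct (continuity_ab_maj g 0 1 ltac:(lra) Hg) as [Mx [HM _]].
  exists (g Mx). split. apply norm_nonneg. intros x Hx. specialize (HM x Hx). unfold g in HM.
  rewrite clamp_id in HM; auto.
Qed.

Lemma vsub_veq d a a' b b' : veq d a a' -> veq d b b' -> veq d (vsub a b) (vsub a' b').
Proof. intros H1 H2 k Hk; unfold vsub; rewrite H1, H2; auto. Qed.

Lemma norm_zv d : norm d zv = 0.
Proof. unfold norm, dot, zv. rewrite rsum_ext with (g := fun _ => 0). rewrite rsum_zero, sqrt_0; auto. intros; ring. Qed.

Lemma Pi_spec d N A t lam v c Bv : prob_vector N lam -> v_equation d N A t lam v ->
  0 <= c < 1 -> (forall i, (i < N)%nat -> forall x, norm d (matvec d (A i) x) <= c * norm d x) ->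
  0 <= Bv -> (forall x, 0 <= x <= 1 -> norm d (v x) <= Bv) ->
  forall s, in_Sigma N s -> veq d (Pi_sym d A t s) (v (pi_sym lam s)).
Proof.
  intros Hl Hv Hc HA HBv Hb s Hs.
  set (P := fun p : vec => forall eps, eps > 0 -> exists n0, forall n, (n0 <= n)%nat ->
       norm d (vsub (fw d A t (restr s n) (fun _ => 0)) p) < eps).
  assert (Hp : P (v (pi_sym lam s))).
  { intros eps Heps. destruct (pow_lt_1_zero c ltac:(rewrite Rabs_pos_eq; lra) (eps / (Bv + 1))) as [n0 Hn0].
    { apply Rdiv_lt_0_compat; lra. }
    exists n0; intros n Hn.
    rewrite (norm_ext d _ _ (vsub_veq d _ _ _ _ (veq_refl d _) (v_iter d N A t lam v Hl Hv n s Hs))).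
    rewrite (norm_ext d _ _ (fw_sub d A t _ _ _)).
    eapply Rle_lt_trans. apply (matw_contr d N A c (proj1 Hc) HA _ (restr_Forall N s n Hs)).
    rewrite restr_length.
    assert (Hq : norm d (vsub (fun _ => 0) (v (pi_sym lam (shift n s)))) <= Bv).
    { eapply Rle_trans. apply norm_sub_triang. fold zv. rewrite norm_zv.
      pose proof (Hb _ (pi_range N lam Hl _ (Sigma_shift N s n Hs))). lra. }
    specialize (Hn0 n Hn). rewrite Rabs_pos_eq in Hn0 by (apply pow_le; lra).
    pose proof (pow_le c n (proj1 Hc)).
    apply Rle_lt_trans with (c ^ n * (Bv + 1)). pose proof (norm_nonneg d (vsub (fun _ => 0) (v (pi_sym lam (shift n s))))). nra.
    replace eps with (eps / (Bv + 1) * (Bv + 1)) by (field; lra). apply Rmult_lt_compat_r; lra. }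
  assert (HP : P (Pi_sym d A t s)) by (unfold Pi_sym; apply epsilon_spec; exists (v (pi_sym lam s)); exact Hp).
  apply norm_zero_veq.
  destruct (Rle_lt_dec (norm d (vsub (Pi_sym d A t s) (v (pi_sym lam s)))) 0) as [Hle|Hlt].
  { pose proof (norm_nonneg d (vsub (Pi_sym d A t s) (v (pi_sym lam s)))); lra. }
  set (e := norm d (vsub (Pi_sym d A t s) (v (pi_sym lam s)))) in *.
  destruct (Hp (e/2) ltac:(lra)) as [n1 H1]. destruct (HP (e/2) ltac:(lra)) as [n2 H2].
  specialize (H1 (max n1 n2) ltac:(lia)). specialize (H2 (max n1 n2) ltac:(lia)).
  assert (e <= norm d (vsub (Pi_sym d A t s) (fw d A t (restr s (max n1 n2)) (fun _ => 0))) +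
              norm d (vsub (fw d A t (restr s (max n1 n2)) (fun _ => 0)) (v (pi_sym lam s)))) by apply norm_vsub_triang.
  rewrite norm_vsub_sym in H. lra.
Qed.
Lemma small_inv eps : 0 < eps -> exists N, forall m, (N <= m)%nat -> / (INR m + 1) < eps.
Proof.
  intros H. destruct (archimed_cor1 eps H) as [N [HN HN0]]. exists N. intros m Hm.
  apply Rle_lt_trans with (/ INR N); auto. apply Rinv_le_contravar.
  apply lt_0_INR; auto. apply le_INR in Hm. lra.
Qed.

Lemma inv_pos_nat m : 0 < / (INR m + 1).
Proof. apply Rinv_0_lt_compat. pose proof (pos_INR m); lra. Qed.

Definition incr (f : nat -> nat) := forall m, (f m < f (S m))%nat.

Lemma incr_ge f : incr f -> forall m, (m <= f m)%nat.
Proof. intros H m; induction m. lia. specialize (H m). lia. Qed.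

Lemma incr_lt f : incr f -> forall a b, (a < b)%nat -> (f a < f b)%nat.
Proof. intros H a b Hab. induction Hab. apply H. specialize (H m). lia. Qed.

Lemma incr_comp f g : incr f -> incr g -> incr (fun m => f (g m)).
Proof. intros Hf Hg m. apply incr_lt; auto. Qed.

Lemma Un_cv_sub u l f : incr f -> Un_cv u l -> Un_cv (fun m => u (f m)) l.
Proof.
  intros Hf H eps Heps. destruct (H eps Heps) as [n0 Hn0]. exists n0. intros n Hn.
  apply Hn0. pose proof (incr_ge f Hf n). lia.
Qed.

Lemma bw1 (u : nat -> R) B : (forall n, Rabs (u n) <= B) ->
  exists f l, incr f /\ Un_cv (fun m => u (f m)) l.
Proof.
  intros Hb. destruct (Bolzano_Weierstrass u (fun c => -B <= c <= B) (compact_P3 (-B) B)) as [l Hl].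
  { intros n; specialize (Hb n); apply Rabs_le_inv' in Hb; lra. }
  assert (Hsel : forall N0 eps, 0 < eps -> exists p, (N0 <= p)%nat /\ Rabs (u p - l) < eps).
  { intros N0 eps He. destruct (Hl (disc l (mkposreal eps He)) N0) as [p [Hp Hv]].
    - exists (mkposreal eps He). intros y Hy; exact Hy.
    - exists p; split; auto. }
  set (sel := fun N0 m => epsilon (inhabits 0%nat) (fun p => (N0 <= p)%nat /\ Rabs (u p - l) < / (INR m + 1))).
  assert (Hs : forall N0 m, (N0 <= sel N0 m)%nat /\ Rabs (u (sel N0 m) - l) < / (INR m + 1)).
  { intros N0 m. unfold sel. apply epsilon_spec. apply Hsel. apply inv_pos_nat. }
  set (f := fix f m := match m with O => sel 0%nat 0%nat | S m => sel (S (f m)) (S m) end).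
  assert (Hf : forall m, Rabs (u (f m) - l) < / (INR m + 1)).
  { intros [|m]; simpl; apply Hs. }
  exists f, l. split.
  - intros m. simpl. apply Hs.
  - intros eps He. destruct (small_inv eps He) as [N0 HN0]. exists N0. intros n Hn.
    unfold R_dist. eapply Rlt_trans. apply Hf. apply HN0. lia.
Qed.

Lemma bwd_coords d (x : nat -> vec) B : (forall n k, (k < d)%nat -> Rabs (x n k) <= B) ->
  forall j, (j <= d)%nat -> exists f L, incr f /\ forall k, (k < j)%nat -> Un_cv (fun m => x (f m) k) (L k).
Proof.
  intros Hb j. induction j; intros Hj.
  - exists (fun m => m), zv. split. intros m; lia. intros; lia.
  - destruct (IHj ltac:(lia)) as [f [L [Hf HL]]].
    destruct (bw1 (fun m => x (f m) j) B) as [g [l [Hg Hl]]]. { intros; apply Hb; lia. }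
    exists (fun m => f (g m)), (fun k => if Nat.eqb k j then l else L k). split.
    + apply incr_comp; auto.
    + intros k Hk. destruct (Nat.eqb_spec k j).
      * subst. exact Hl.
      * apply (Un_cv_sub (fun m => x (f m) k)); auto. apply HL; lia.
Qed.

Lemma bwd d (x : nat -> vec) B : (forall n k, (k < d)%nat -> Rabs (x n k) <= B) ->
  exists f L, incr f /\ forall eps, eps > 0 -> exists N0, forall m, (N0 <= m)%nat ->
    norm d (vsub (x (f m)) L) < eps.
Proof.
  intros Hb. destruct (bwd_coords d x B Hb d (le_n _)) as [f [L [Hf HL]]].
  exists f, L. split; auto.
  assert (Hs : forall j, (j <= d)%nat -> forall eps, eps > 0 -> exists N0, forall m, (N0 <= m)%nat ->
     rsum j (fun k => Rabs (vsub (x (f m)) L k)) < eps).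
  { intros j. induction j; intros Hj eps He.
    - exists 0%nat; intros; simpl; lra.
    - destruct (IHj ltac:(lia) (eps/2) ltac:(lra)) as [N1 H1].
      destruct (HL j ltac:(lia) (eps/2) ltac:(lra)) as [N2 H2].
      exists (max N1 N2). intros m Hm. simpl.
      specialize (H1 m ltac:(lia)). specialize (H2 m ltac:(lia)). unfold R_dist in H2. unfold vsub at 2. lra. }
  intros eps He. destruct (Hs d (le_n _) eps He) as [N0 H0]. exists N0. intros m Hm.
  eapply Rle_lt_trans. apply norm_le_sum_abs. auto.
Qed.

Lemma unif_rho_i d M (Ai : mat) :
  (forall x, norm d (matvec d Ai x) <= norm d x) ->
  (forall w, pclos d M w -> pint d M (matvec d Ai w)) ->
  exists rho, 0 < rho /\ forall u, M u -> norm d u = 1 -> forall z, norm d (vsub z (matvec d Ai u)) < rho -> M z.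
Proof.
  intros Hc Hp. apply NNPP. intros Hn.
  assert (Hn' : forall n : nat, exists u, M u /\ norm d u = 1 /\ exists z, norm d (vsub z (matvec d Ai u)) < / (INR n + 1) /\ ~ M z).
  { intros n. apply NNPP; intros Hu. apply Hn. exists (/ (INR n + 1)). split. apply inv_pos_nat.
    intros u Hu1 Hu2 z Hz. apply NNPP; intros HMz. apply Hu. exists u. repeat split; auto. exists z; auto. }
  set (U := fun n => epsilon (inhabits zv) (fun u => M u /\ norm d u = 1 /\ exists z, norm d (vsub z (matvec d Ai u)) < / (INR n + 1) /\ ~ M z)).
  assert (HU : forall n, M (U n) /\ norm d (U n) = 1 /\ exists z, norm d (vsub z (matvec d Ai (U n))) < / (INR n + 1) /\ ~ M z).
  { intros n; unfold U; apply epsilon_spec; apply Hn'. }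
  destruct (bwd d U 1) as [f [L [Hf HL]]].
  { intros n k Hk. destruct (HU n) as [_ [H1 _]]. rewrite <- H1. apply coord_le_norm; auto. }
  assert (HnL : norm d L = 1).
  { destruct (Req_dec (norm d L) 1) as [|Hne]; auto. exfalso.
    destruct (HL (Rabs (norm d L - 1))) as [N0 HN0]. { apply Rabs_pos_lt; lra. }
    specialize (HN0 N0 (le_n _)). pose proof (norm_rev_triang d (U (f N0)) L).
    destruct (HU (f N0)) as [_ [H1 _]]. rewrite H1 in H. rewrite Rabs_minus_sym in H. lra. }
  assert (HcL : pclos d M L).
  { split. lra. intros eps He. destruct (HL eps He) as [N0 HN0]. exists (U (f N0)). split. apply HU. apply HN0; lia. }
  destruct (Hp L HcL) as [e0 [He0 Hball]].
  destruct (HL (e0/2) ltac:(lra)) as [N1 HN1]. destruct (small_inv (e0/2) ltac:(lra)) as [N2 HN2].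
  set (m := max N1 N2).
  destruct (HU (f m)) as [_ [_ [z [Hz HMz]]]]. apply HMz. apply Hball.
  eapply Rle_lt_trans. apply (norm_vsub_triang d z (matvec d Ai (U (f m)))).
  rewrite <- matvec_vsub. specialize (HN1 m ltac:(lia)). specialize (HN2 (f m)).
  pose proof (incr_ge f Hf m). specialize (HN2 ltac:(lia)). pose proof (Hc (vsub (U (f m)) L)). lra.
Qed.
Lemma M_veq d M x y : popen d M -> M x -> veq d x y -> M y.
Proof.
  intros [_ Ho] Hx Hv. destruct (Ho x Hx) as [e [He Hb]]. apply Hb.
  rewrite (veq_norm_zero d y x (veq_sym d x y Hv)). lra.
Qed.

Lemma M_pclos d M u : popen d M -> M u -> pclos d M u.
Proof.
  intros [[Hp _] _] Hu. split. apply Hp; auto. intros eps He. exists u. split; auto.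
  rewrite veq_norm_zero by apply veq_refl. lra.
Qed.

Lemma pint_in d M z : pint d M z -> M z.
Proof. intros [e [He H]]. apply H. rewrite veq_norm_zero by apply veq_refl. lra. Qed.

Lemma M_invw d N A M : popen d M ->
  (forall i, (i < N)%nat -> forall w, pclos d M w -> pint d M (matvec d (A i) w)) ->
  forall w, Forall (fun i => (i < N)%nat) w -> forall q, M q -> M (matvec d (matw d A w) q).
Proof.
  intros HM Hi w Hw. induction Hw; intros q Hq; simpl.
  - eapply M_veq; eauto. apply veq_sym, matvec_idm.
  - rewrite matvec_matmul. apply (pint_in d). apply Hi; auto. apply (M_pclos d); auto.
Qed.

Lemma vsub_scal c x y : vsub (scal c x) (scal c y) = scal c (vsub x y).
Proof. apply functional_extensionality; intros; unfold vsub, scal; ring. Qed.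

Lemma ball_scaled d M (Ai : mat) rho : popen d M ->
  (forall u, M u -> norm d u = 1 -> forall z, norm d (vsub z (matvec d Ai u)) < rho -> M z) ->
  forall u, M u -> forall z, norm d (vsub z (matvec d Ai u)) < rho * norm d u -> M z.
Proof.
  intros HM Hr u Hu z Hz. destruct HM as [[Hpos Hsc] Ho].
  set (nu := norm d u). assert (Hnu : 0 < nu) by (apply Hpos; auto).
  assert (H1 : M (scal (/ nu) u)) by (apply Hsc; auto; apply Rinv_neq_0_compat; lra).
  assert (H2 : norm d (scal (/ nu) u) = 1) by (rewrite norm_scal, Rabs_pos_eq by (left; apply Rinv_0_lt_compat; lra); fold nu; field; lra).
  assert (H3 : M (scal (/ nu) z)).
  { apply (Hr _ H1 H2). rewrite matvec_scal, vsub_scal, norm_scal, Rabs_pos_eq by (left; apply Rinv_0_lt_compat; lra).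
    apply Rmult_lt_reg_l with nu; auto. replace (nu * (/ nu * norm d (vsub z (matvec d Ai u)))) with (norm d (vsub z (matvec d Ai u))) by (field; lra). unfold nu in *; lra. }
  replace z with (scal nu (scal (/ nu) z)). apply Hsc; auto; lra.
  apply functional_extensionality; intros; unfold scal; field; lra.
Qed.

Lemma functional_lb d M b z0 r : 0 < r -> (forall z, M z -> dot d b z <> 0) ->
  (forall z, norm d (vsub z z0) < r -> M z) -> r * norm d b <= Rabs (dot d b z0).
Proof.
  intros Hr Hb Hball. destruct (Rle_lt_dec (r * norm d b) (Rabs (dot d b z0))) as [|Hlt]; auto. exfalso.
  assert (Hnb : 0 < norm d b) by (pose proof (Rabs_pos (dot d b z0)); pose proof (norm_nonneg d b); nra).
  assert (Hbb : dot d b b = norm d b * norm d b) by (symmetry; apply norm_sq).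
  set (beta := dot d b z0 / dot d b b).
  set (z' := vsub z0 (scal beta b)).
  apply (Hb z'). apply Hball.
  - replace (vsub z' z0) with (scal (- beta) b) by (apply functional_extensionality; intros; unfold z', vsub, scal; ring).
    rewrite norm_scal, Rabs_Ropp. unfold beta. unfold Rdiv. rewrite Rabs_mult, Rabs_inv, Hbb, (Rabs_pos_eq (_ * _)) by nra.
    apply Rmult_lt_reg_l with (norm d b); auto.
    replace (norm d b * (Rabs (dot d b z0) * / (norm d b * norm d b) * norm d b)) with (Rabs (dot d b z0)) by (field; lra). lra.
  - unfold z'. rewrite dot_sym, dot_sub_l, dot_scal_l. unfold beta. rewrite (dot_sym d z0 b). field. rewrite Hbb; nra.
Qed.

Definition vecT d (B : mat) (a : vec) : vec := fun k => rsum d (fun j => a j * B j k).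

Lemma dot_vecT d B a z : dot d a (matvec d B z) = dot d (vecT d B a) z.
Proof.
  unfold dot, matvec, vecT. transitivity (rsum d (fun j => rsum d (fun k => a j * B j k * z k))).
  - apply rsum_ext; intros. rewrite <- rsum_scal. apply rsum_ext; intros; ring.
  - rewrite rsum_swap. apply rsum_ext; intros. rewrite Rmult_comm, <- rsum_scal. apply rsum_ext; intros; ring.
Qed.

Lemma matw_single d A i q : veq d (matvec d (matw d A (i :: nil)) q) (matvec d (A i) q).
Proof. simpl. rewrite matvec_matmul. rewrite (matvec_ext d (A i) _ _ (matvec_idm d q)). apply veq_refl. Qed.

Lemma dominated_bound d N A M :
  dominated_splitting d N A M ->
  (forall i, (i < N)%nat -> forall x, norm d (matvec d (A i) x) <= norm d x) ->
  exists K, 0 < K /\ forall w' i, Forall (fun j => (j < N)%nat) w' -> (i < N)%nat ->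
    forall q, M q -> opnorm d (matw d A (w' ++ i :: nil)) * norm d q <= K * norm d (matvec d (matw d A (w' ++ i :: nil)) q).
Proof.
  intros [HM [[u0 Hu0] [_ [Hint [a [Ha Hav]]]]]] Hc1.
  destruct (proj2 HM u0 Hu0) as [r0 [Hr0 Hball0]].
  destruct (finite_min N (fun i rho => forall u, M u -> norm d u = 1 -> forall z, norm d (vsub z (matvec d (A i) u)) < rho -> M z)) as [rho [Hrho Hr]].
  { intros i c c' H [Hc' Hcc] u Hu Hu1 z Hz. apply (H u Hu Hu1 z). lra. }
  { intros i Hi. destruct (unif_rho_i d M (A i) (Hc1 i Hi) (Hint i Hi)) as [rho [Hp Hq]]. exists rho; split; auto. }
  assert (Hav' : forall z, M z -> dot d a z <> 0) by (intros; apply Hav, M_pclos; auto).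
  assert (Hpos : forall z, M z -> 0 < norm d z) by (intros; apply (proj1 (proj1 HM)); auto).
  assert (HG : forall W, W <> nil -> Forall (fun j => (j < N)%nat) W -> forall m, M m ->
     rho * norm d a * norm d (matvec d (matw d A W) m) <= Rabs (dot d a (matvec d (matw d A W) m))).
  { intros W HW HWf m Hm. destruct W as [|j W2]; [congruence|]. apply Forall_cons_iff in HWf. destruct HWf as [Hj HW2].
    simpl. rewrite matvec_matmul. set (m' := matvec d (matw d A W2) m).
    assert (Hm' : M m') by (apply (M_invw d N A M HM Hint); auto).
    assert (H1 := functional_lb d M a (matvec d (A j) m') (rho * norm d m')).
    pose proof (Hpos m' Hm').
    assert (rho * norm d m' * norm d a <= Rabs (dot d a (matvec d (A j) m'))).
    { apply H1; auto. nra. apply (ball_scaled d M (A j) rho HM (Hr j Hj)); auto. }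
    pose proof (Hc1 j Hj m'). pose proof (norm_nonneg d a).
    assert (rho * norm d a * norm d (matvec d (A j) m') <= rho * norm d a * norm d m') by (apply Rmult_le_compat_l; nra). lra. }
  set (C0 := 2 / r0 * (2 * norm d u0 + r0 / 2)).
  exists (C0 / (rho * rho)). split.
  { unfold C0. pose proof (norm_nonneg d u0). apply Rdiv_lt_0_compat; [|nra].
    apply Rmult_lt_0_compat. apply Rdiv_lt_0_compat; lra. lra. }
  intros w' i Hw' Hi q Hq.
  set (W := w' ++ i :: nil). set (b := vecT d (matw d A w') a).
  assert (HWf : Forall (fun j => (j < N)%nat) W) by (apply Forall_app; split; auto).
  assert (HWne : W <> nil) by (unfold W; destruct w'; discriminate).
  assert (Hdec : forall x, veq d (matvec d (matw d A W) x) (matvec d (matw d A w') (matvec d (A i) x))).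
  { intros x. eapply veq_trans. apply matvec_matw_app. rewrite (matvec_ext d _ _ _ (matw_single d A i x)). apply veq_refl. }
  assert (Hdot : forall x, dot d a (matvec d (matw d A W) x) = dot d b (matvec d (A i) x)).
  { intros x. rewrite (dot_ext d a a _ _ (veq_refl d a) (Hdec x)). apply dot_vecT. }
  assert (Hbv : forall z, M z -> dot d b z <> 0).
  { intros z Hz. unfold b. rewrite <- dot_vecT. apply Hav'. apply (M_invw d N A M HM Hint); auto. }
  assert (HL : rho * norm d q * norm d b <= norm d a * norm d (matvec d (matw d A W) q)).
  { eapply Rle_trans. apply (functional_lb d M b (matvec d (A i) q)); auto.
    pose proof (Hpos q Hq); nra. apply (ball_scaled d M (A i) rho HM (Hr i Hi)); auto.
    rewrite <- Hdot. eapply Rle_trans. apply cauchy_schwarz. lra. }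
  assert (HU : forall m, M m -> rho * norm d a * norm d (matvec d (matw d A W) m) <= norm d b * norm d m).
  { intros m Hm. eapply Rle_trans. apply HG; auto. rewrite Hdot. eapply Rle_trans. apply cauchy_schwarz.
    apply Rmult_le_compat_l. apply norm_nonneg. apply Hc1; auto. }
  assert (Hop : opnorm d (matw d A W) * (rho * norm d a) <= norm d b * C0).
  { rewrite Rmult_comm. apply Rmult_le_reg_l with (/ (rho * norm d a)). apply Rinv_0_lt_compat; nra.
    rewrite <- Rmult_assoc, Rinv_l, Rmult_1_l by nra.
    apply opnorm_least. intros x Hx.
    set (m1 := vadd u0 (scal (r0/2) x)).
    assert (Hm1 : M m1).
    { apply Hball0. replace (vsub m1 u0) with (scal (r0/2) x) by (apply functional_extensionality; intros; unfold m1, vsub, vadd, scal; ring).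
      rewrite norm_scal, Rabs_pos_eq by lra. nra. }
    assert (Hnm1 : norm d m1 <= norm d u0 + r0/2).
    { eapply Rle_trans. apply norm_triang. rewrite norm_scal, Rabs_pos_eq by lra. nra. }
    replace x with (scal (2 / r0) (vsub m1 u0)) by (apply functional_extensionality; intros; unfold m1, vsub, vadd, scal; field; lra).
    rewrite matvec_scal, matvec_vsub, norm_scal, Rabs_pos_eq by (left; apply Rdiv_lt_0_compat; lra).
    pose proof (HU m1 Hm1). pose proof (HU u0 Hu0). pose proof (norm_sub_triang d (matvec d (matw d A W) m1) (matvec d (matw d A W) u0)).
    apply Rmult_le_reg_l with (rho * norm d a). nra.
    replace (rho * norm d a * (/ (rho * norm d a) * (norm d b * C0))) with (norm d b * C0) by (field; nra).
    unfold C0. pose proof (norm_nonneg d b). pose proof (norm_nonneg d u0).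
    assert (0 < 2 / r0) by (apply Rdiv_lt_0_compat; lra).
    apply Rle_trans with (2 / r0 * (rho * norm d a * (norm d (matvec d (matw d A W) m1) + norm d (matvec d (matw d A W) u0)))).
    { assert (0 <= rho * norm d a) by nra.
      rewrite <- (Rmult_assoc (rho * norm d a)), (Rmult_comm (rho * norm d a) (2 / r0)), Rmult_assoc.
      apply Rmult_le_compat_l; [lra|]. apply Rmult_le_compat_l; lra. }
    apply Rle_trans with (2 / r0 * (norm d b * (norm d m1 + norm d u0))).
    { apply Rmult_le_compat_l; [lra|]. rewrite Rmult_plus_distr_l. lra. }
    replace (norm d b * (2 / r0 * (2 * norm d u0 + r0 / 2))) with (2 / r0 * (norm d b * (2 * norm d u0 + r0 / 2))) by ring.
    apply Rmult_le_compat_l; [lra|]. apply Rmult_le_compat_l; lra. }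
  pose proof (Hpos q Hq). pose proof (norm_nonneg d b). pose proof (opnorm_lub d (matw d A W)).
  assert (HK : opnorm d (matw d A W) * norm d q * (rho * norm d a * rho) <= C0 / (rho * rho) * norm d (matvec d (matw d A W) q) * (rho * norm d a * rho)).
  { replace (C0 / (rho * rho) * norm d (matvec d (matw d A W) q) * (rho * norm d a * rho)) with (C0 * (norm d a * norm d (matvec d (matw d A W) q))) by (field; lra).
    apply Rle_trans with (norm d b * C0 * (rho * norm d q)).
    { replace (opnorm d (matw d A W) * norm d q * (rho * norm d a * rho)) with (opnorm d (matw d A W) * (rho * norm d a) * (rho * norm d q)) by ring.
      apply Rmult_le_compat_r; nra. }
    assert (0 <= C0) by (unfold C0; pose proof (norm_nonneg d u0); assert (0 < 2/r0) by (apply Rdiv_lt_0_compat; lra); nra).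
    nra. }
  apply Rmult_le_reg_r with (rho * norm d a * rho). apply Rmult_lt_0_compat; [apply Rmult_lt_0_compat|]; lra. exact HK.
Qed.
Lemma ln_le' x y : 0 < x -> x <= y -> ln x <= ln y.
Proof. intros H1 H2. destruct H2 as [H2|H2]. left; apply ln_increasing; auto. subst; lra. Qed.

Lemma N_ge_2 d N A t z : (forall i, (i < N)%nat -> contraction d (faff d A t i)) ->
  (forall i, (i < N)%nat -> veq d (faff d A t i (z 0%nat)) (z i) /\ veq d (faff d A t i (z N)) (z (S i))) ->
  ~ veq d (z N) (z 0%nat) -> (1 <= N)%nat -> (2 <= N)%nat.
Proof.
  intros Hc Hz Hne H1. destruct (Nat.eq_dec N 1) as [E|E]; [|lia]. exfalso. subst N.
  destruct (Hz 0%nat ltac:(lia)) as [Z0 Z1]. destruct (Hc 0%nat ltac:(lia)) as [c [Hc1 Hc2]].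
  specialize (Hc2 (z 1%nat) (z 0%nat)).
  rewrite (norm_ext d _ (vsub (z 1%nat) (z 0%nat)) (vsub_veq d _ _ _ _ Z1 Z0)) in Hc2.
  apply Hne. apply norm_zero_veq. pose proof (norm_nonneg d (vsub (z 1%nat) (z 0%nat))). nra.
Qed.

Lemma lam_lt1 N lam : prob_vector N lam -> (2 <= N)%nat -> forall i, (i < N)%nat -> lam i < 1.
Proof.
  intros H HN i Hi. destruct i as [|i].
  - destruct (gam_bounds N lam H 1%nat ltac:(lia)). pose proof (lam_pos N lam H 1%nat ltac:(lia)).
    unfold gam in *. simpl in *. lra.
  - destruct (gam_bounds N lam H (S i) Hi). pose proof (lam_pos N lam H 0%nat ltac:(lia)).
    assert (lam 0%nat <= gam lam (S i)).
    { unfold gam. replace (lam 0%nat) with (rsum 1 lam) by (simpl; ring). apply rsum_mono. lia.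
      intros; left; apply (lam_pos N lam H); lia. }
    pose proof (lam_pos N lam H (S i) Hi). lra.
Qed.

Lemma lamw_le N lam L : prob_vector N lam -> (forall i, (i < N)%nat -> lam i <= L) ->
  forall w, Forall (fun i => (i < N)%nat) w -> lamw lam w <= L ^ length w.
Proof.
  intros H HL w Hw. induction Hw; simpl. lra.
  pose proof (lamw_bounds N lam H l Hw). pose proof (lam_pos N lam H x H0). specialize (HL x H0).
  apply Rmult_le_compat; lra.
Qed.

Lemma norm_matvec_sub_sym d B a b : norm d (matvec d B (vsub a b)) = norm d (matvec d B (vsub b a)).
Proof. rewrite !matvec_vsub. apply norm_vsub_sym. Qed.

Theorem lemma3p3 (d N : nat) (A : nat -> mat) (t : nat -> vec) (z : nat -> vec)
    (lam : nat -> R) (M : vec -> Prop) (v : R -> vec)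
    (HA : forall i, (i < N)%nat -> invertible d (A i))
    (Hcontr : forall i, (i < N)%nat -> contraction d (faff d A t i))
    (Hzip : forall i, (i < N)%nat ->
       veq d (faff d A t i (z 0%nat)) (z i) /\ veq d (faff d A t i (z N)) (z (S i)))
    (Hnd : nondegenerate d N A t z M)
    (Hdom : dominated_splitting d N A M)
    (Hlam : prob_vector N lam)
    (Hvc : v_continuous d v)
    (Hveq : v_equation d N A t lam v) :
  forall s, in_Sigma N s -> ~ in_B d N A t M s ->
  forall r, (exists n0, forall n, (n0 <= n)%nat ->
               ln (opnorm d (matw d A (restr s n))) / ln (lamw lam (restr s n)) <= r) ->
  alpha_le d v (pi_sym lam s) r.
Proof.
  intros s Hs HnB r [n0 Hr] eps delta Heps Hdelta.
  assert (HN : (2 <= N)%nat).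
  { destruct Hnd as [_ [Hne _]]. apply (N_ge_2 d N A t z Hcontr Hzip Hne). specialize (Hs 0%nat). lia. }
  destruct (finite_max N (fun i c => lam i <= c)) as [L [HL HLb]].
  { intros; lra. }
  { intros i Hi. exists (lam i). split; [|lra]. split. left; apply (lam_pos N lam Hlam i Hi). apply (lam_lt1 N lam Hlam HN i Hi). }
  destruct (unif_contr d N A t Hcontr) as [c [Hc Hcb]].
  assert (Hc1 : forall i, (i < N)%nat -> forall x, norm d (matvec d (A i) x) <= norm d x).
  { intros i Hi x. eapply Rle_trans. apply Hcb; auto. pose proof (norm_nonneg d x). nra. }
  destruct (v_bounded d v Hvc) as [Bv [HBv HBvb]].
  pose proof (Pi_spec d N A t lam v c Bv Hlam Hveq Hc Hcb HBv HBvb) as HPi.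
  destruct (dominated_bound d N A M Hdom Hc1) as [K [HK HKb]].
  assert (HMo : popen d M) by (apply Hdom).
  assert (Hint : forall i, (i < N)%nat -> forall w, pclos d M w -> pint d M (matvec d (A i) w)) by (apply Hdom).
  assert (Hex : exists n l m, (1 <= n)%nat /\ forall K0, exists k, (K0 <= k)%nat /\ ~ Bnlm d N A t M n l m (shift k s)).
  { apply NNPP; intros H. apply HnB. intros n l m Hn Hl Hm. apply NNPP; intros H2. apply H. exists n, l, m. split; auto.
    intros K0. apply NNPP; intros H3. apply H2. exists K0. intros k Hk. apply NNPP; intros H4. apply H3. exists k; auto. }
  destruct Hex as [n [l [m [Hn HnBk]]]].
  assert (HnR : 0 < INR n) by (apply lt_0_INR; lia).
  set (theta := Rmin delta (Rmin (exp (- ln (K * INR n) / eps)) (1/2))).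
  assert (Htheta : 0 < theta) by (unfold theta; repeat apply Rmin_glb_lt; try lra; apply exp_pos).
  destruct (pow_lt_1_zero L ltac:(rewrite Rabs_pos_eq; lra) theta Htheta) as [K0 HK0].
  destruct (HnBk (max K0 (max n0 1))) as [k [Hk HBk]].
  unfold Bnlm in HBk. cbv zeta in HBk. apply NNPP in HBk.
  destruct HBk as [y [[[Hny HMy] Hfar] [HGy _]]].
  set (P := Pi_sym d A t (shift k s)) in *.
  set (q := vsub y P).
  destruct HGy as [j [Hj Hyj]].
  set (w := restr s k).
  destruct k as [|k']; [lia|].
  assert (Hw : w = restr s k' ++ s k' :: nil) by apply restr_S.
  assert (Hwf : Forall (fun i => (i < N)%nat) w) by apply (restr_Forall N s (S k') Hs).
  set (x := pi_sym lam s). set (x' := pi_sym lam (conc (S k') s j)).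
  assert (Hsk : in_Sigma N (shift (S k') s)) by (apply Sigma_shift; auto).
  assert (Hcs : in_Sigma N (conc (S k') s j)) by (apply conc_Sigma; auto).
  assert (Hvx : veq d (vsub (v x) (v x')) (matvec d (matw d A w) (vsub P y))).
  { pose proof (v_iter d N A t lam v Hlam Hveq (S k') s Hs) as E1.
    pose proof (v_iter d N A t lam v Hlam Hveq (S k') (conc (S k') s j) Hcs) as E2.
    rewrite conc_restr, conc_shift in E2.
    eapply veq_trans. apply (vsub_veq d _ _ _ _ E1 E2). fold w.
    eapply veq_trans. apply fw_sub. rewrite (matvec_ext d _ _ (vsub P y)). apply veq_refl.
    apply vsub_veq. apply veq_sym, HPi; auto.
    apply veq_sym. eapply veq_trans. apply Hyj. apply HPi; auto. }
  set (D := norm d (vsub (v x) (v x'))).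
  assert (HD : D = norm d (matvec d (matw d A w) q)).
  { unfold D. rewrite (norm_ext d _ _ Hvx). unfold q. apply norm_matvec_sub_sym. }
  assert (HMq : M (matvec d (matw d A w) q)) by (apply (M_invw d N A M HMo Hint); auto).
  assert (HDpos : 0 < D) by (rewrite HD; apply (proj1 (proj1 HMo)); auto).
  assert (Hq : / INR n <= norm d q) by (unfold q; lra).
  assert (Hinvn : 0 < / INR n) by (apply Rinv_0_lt_compat; auto).
  set (op := opnorm d (matw d A w)).
  assert (Hop1 : op * norm d q <= K * D).
  { rewrite HD. unfold op. rewrite Hw. rewrite Hw in HMq. apply HKb; auto; try apply (restr_Forall N s k' Hs); try apply Hs. }
  assert (Hoppos : 0 < op).
  { pose proof (opnorm_ge d (matw d A w) q). fold op in H. rewrite <- HD in H.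
    pose proof (norm_nonneg d q). destruct (Rle_lt_dec op 0); [|auto]. nra. }
  assert (Hople1 : op <= 1).
  { unfold op. apply opnorm_least. intros u Hu. eapply Rle_trans. apply (matw_contr d N A c (proj1 Hc) Hcb w Hwf).
    pose proof (pow_le c (length w) (proj1 Hc)). assert (c ^ length w <= 1). { rewrite <- (pow1 (length w)). apply pow_incr. lra. }
    pose proof (norm_nonneg d u). nra. }
  assert (HDlow : op / (K * INR n) <= D).
  { apply Rmult_le_reg_r with (K * INR n). nra. unfold Rdiv. rewrite Rmult_assoc, Rinv_l, Rmult_1_r by nra.
    apply Rle_trans with (op * norm d q * INR n).
    { replace op with (op * / INR n * INR n) at 1 by (field; lra). apply Rmult_le_compat_r; [lra|]. apply Rmult_le_compat_l; lra. }
    nra. }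
  set (lw := lamw lam w).
  assert (Hlw : 0 < lw <= 1) by (apply (lamw_bounds N lam Hlam w Hwf)).
  assert (Hlwt : lw < theta).
  { eapply Rle_lt_trans. apply (lamw_le N lam L Hlam HLb w Hwf). unfold w. rewrite restr_length.
    specialize (HK0 (S k') ltac:(lia)). rewrite Rabs_pos_eq in HK0 by (apply pow_le; lra). exact HK0. }
  assert (Ht1 : theta <= delta) by apply Rmin_l.
  assert (Ht2 : theta <= exp (- ln (K * INR n) / eps)) by (eapply Rle_trans; [apply Rmin_r|apply Rmin_l]).
  assert (Ht3 : theta <= 1/2) by (eapply Rle_trans; [apply Rmin_r|apply Rmin_r]).
  assert (Hxx : x - x' = lw * (pi_sym lam (shift (S k') s) - pi_sym lam j)).
  { unfold x, x'. rewrite (pi_iter N lam Hlam (S k') s Hs), (pi_conc N lam Hlam (S k') s j Hs Hj). unfold lw, w. ring. }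
  pose proof (pi_range N lam Hlam _ Hsk). pose proof (pi_range N lam Hlam j Hj).
  assert (Hdist : Rabs (x - x') <= lw).
  { rewrite Hxx, Rabs_mult, Rabs_pos_eq by lra. pose proof (Rabs_pos (pi_sym lam (shift (S k') s) - pi_sym lam j)).
    assert (Rabs (pi_sym lam (shift (S k') s) - pi_sym lam j) <= 1) by (apply Rabs_le; lra). nra. }
  assert (Hneq : x <> x').
  { intros E. assert (D = 0). { unfold D. rewrite E. apply veq_norm_zero, veq_refl. } lra. }
  assert (Hdpos : 0 < Rabs (x - x')) by (apply Rabs_pos_lt; lra).
  exists x'. split; [apply (pi_range N lam Hlam); auto|]. split.
  { split. rewrite Rabs_minus_sym; auto. rewrite Rabs_minus_sym. lra. }
  split; [fold D; lra|]. fold D.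
  assert (Hlnlw : ln lw < 0) by (rewrite <- ln_1; apply ln_increasing; lra).
  assert (Hlnd : ln (Rabs (x - x')) <= ln lw) by (apply ln_le'; auto).
  assert (Hr' := Hr (S k') ltac:(lia)). fold w op lw in Hr'.
  assert (Hlnop : ln op <= 0) by (rewrite <- ln_1; apply ln_le'; auto).
  assert (Hrop : r * ln lw <= ln op).
  { replace (ln op) with (ln op / ln lw * ln lw) by (field; lra). assert (0 <= (r - ln op / ln lw) * (- ln lw)) by (apply Rmult_le_pos; lra). nra. }
  assert (Hr0 : 0 <= r).
  { eapply Rle_trans; [|exact Hr']. replace (ln op / ln lw) with ((- ln op) * / (- ln lw)) by (field; lra).
    apply Rmult_le_pos. lra. left; apply Rinv_0_lt_compat; lra. }
  assert (Hel : eps * ln lw < - ln (K * INR n)).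
  { assert (ln lw < - ln (K * INR n) / eps).
    { rewrite <- (ln_exp (- ln (K * INR n) / eps)). apply ln_increasing; lra. }
    apply Rmult_lt_compat_l with (r := eps) in H1; auto.
    replace (eps * (- ln (K * INR n) / eps)) with (- ln (K * INR n)) in H1 by (field; lra). exact H1. }
  assert (HlnD : ln op - ln (K * INR n) <= ln D).
  { assert (0 < K * INR n) by nra.
    replace (ln op - ln (K * INR n)) with (ln (op / (K * INR n))).
    apply ln_le'; auto. apply Rdiv_lt_0_compat; auto.
    unfold Rdiv. rewrite ln_mult, ln_Rinv; try ring; auto. all: try (apply Rinv_0_lt_compat; auto). }
  set (b := ln (Rabs (x - x'))) in *.
  assert (Hb : b < 0) by lra.
  assert (Hmain : (r + eps) * b < ln D).
  { assert ((r + eps) * b <= (r + eps) * ln lw) by (apply Rmult_le_compat_l; lra). lra. }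
  apply Rmult_lt_reg_r with (- b). lra.
  replace (ln D / b * - b) with (- ln D) by (field; lra). nra.
Qed.
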